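(* Let $F$, $G$, and $H$ be simple graphs. Then \[\hom(F,G\cdot H)=\sum_{\mathcal{R}}\hom(F/\mathcal{R},G)\,\hom\Big(\coprod_{R\in\mathcal{R}}F[R],H\Big),\] where the sum ranges over all partitions $\mathcal{R}$ of $V(F)$ such that $F[R]$ is connected for all $R\in\mathcal{R}$.
   Context: All graphs are finite, undirected, without multiple edges; simple means without loops. $\hom(F,G)$ counts homomorphisms $F\to G$. $G\cdot H$ is the lexicographic product: vertex set $V(G)\times V(H)$, with $(g,h)$ adjacent to $(g',h')$ iff $g=g'$ and $hh'\in E(H)$, or $gg'\in E(G)$. $F[R]$ is the subgraph induced by $R$; $\coprod$ is disjoint union. For a partition $\mathcal{R}$ of $V(F)$, $F/\mathcal{R}$ is the simple graph with vertex set $\mathcal{R}$ and an edge $PQ$ ($P\ne Q$) iff some $p\in P$ and $q\in Q$ are adjacent in $F$. *)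

(* Defs.v *)
From mathcomp Require Import all_boot.
Set Implicit Arguments. Unset Strict Implicit. Unset Printing Implicit Defensive.

Definition simple_graph (T : finType) (e : rel T) : Prop :=
  symmetric e /\ irreflexive e.

Definition hom (A B : finType) (eA : rel A) (eB : rel B) : nat :=
  #|[set f : {ffun A -> B} | [forall x, forall y, eA x y ==> eB (f x) (f y)]]|.

Definition lexprod (TG TH : finType) (eG : rel TG) (eH : rel TH) : rel (TG * TH) :=
  fun a b => ((a.1 == b.1) && eH a.2 b.2) || eG a.1 b.1.

Definition block (T : finType) (R : {set {set T}}) := {X : {set T} | X \in R}.

Definition quot_rel (T : finType) (e : rel T) (R : {set {set T}}) : rel (block R) :=
  fun P Q => (val P != val Q) &&
             [exists p in val P, exists q in val Q, e p q].

(* Disjoint union of the induced subgraphs F[X], X in R: vertices are pairs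
   (X, x) with x in X; (X,x) ~ (Y,y) iff X = Y and x ~ y in F. *)
Definition coprod_type (T : finType) (R : {set {set T}}) :=
  {X : block R & {x : T | x \in val X}}.

Definition coprod_rel (T : finType) (e : rel T) (R : {set {set T}}) :
  rel (coprod_type R) :=
  fun u v => (tag u == tag v) && e (val (tagged u)) (val (tagged v)).

Definition induced_connected (T : finType) (e : rel T) (X : {set T}) : bool :=
  (X != set0) &&
  [forall x in X, forall y in X,
     connect [rel a b | [&& a \in X, b \in X & e a b]] x y].

Arguments quot_rel {T} e R.
Arguments coprod_rel {T} e R.

(* Main.v *)
Require Import Defs.
From mathcomp Require Import all_boot.

Set Implicit Arguments. Unset Strict Implicit. Unset Printing Implicit Defensive.

Lemma homP (A B : finType) (eA : rel A) (eB : rel B) (f : {ffun A -> B}) :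
  reflect (forall x y, eA x y -> eB (f x) (f y))
          [forall x, forall y, eA x y ==> eB (f x) (f y)].
Proof.
apply: (iffP forallP) => [H x y exy | H x].
  by move/forallP: (H x) => /(_ y)/implyP; apply.
by apply/forallP => y; apply/implyP; apply: H.
Qed.

Lemma connect_const (T : finType) (U : Type) (e : rel T) (k : T -> U) :
  (forall a b, e a b -> k a = k b) -> forall x y, connect e x y -> k x = k y.
Proof.
move=> H x y /connectP [p pth ->].
elim: p x pth => //= z p IH x /andP [exz pth].
by rewrite (H _ _ exz) (IH _ pth).
Qed.

Lemma conn_restrict (T : finType) (e e' : rel T) (X : {set T}) x y :
  (forall a b, e a b -> e' a b) -> (forall a b, a \in X -> e a b -> b \in X) ->
  x \in X -> connect e x y ->
  connect [rel a b | [&& a \in X, b \in X & e' a b]] x y.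
Proof.
move=> He Hc Hx /connectP [p pth ->].
elim: p x Hx pth => [|z p IH] x Hx /=; first by rewrite connect0.
case/andP=> exz pth. have Hz := Hc _ _ Hx exz.
apply: connect_trans (connect1 _) (IH z Hz pth).
by rewrite /= Hx Hz He.
Qed.

Definition crel (TF TG TH : finType) (eF : rel TF) (f : {ffun TF -> TG * TH}) : rel TF :=
  [rel a b | eF a b && ((f a).1 == (f b).1)].

Definition canon (TF TG TH : finType) (eF : rel TF) (f : {ffun TF -> TG * TH}) :=
  equivalence_partition (connect (crel eF f)) [set: TF].

Lemma crel_connect_sym (TF TG TH : finType) (eF : rel TF) (f : {ffun TF -> TG * TH}) :
  symmetric eF -> connect_sym (crel eF f).
Proof. by move=> sF; apply: sym_connect_sym => a b; rewrite /crel /= sF eq_sym. Qed.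

Lemma canon_equiv (TF TG TH : finType) (eF : rel TF) (f : {ffun TF -> TG * TH}) :
  symmetric eF -> {in [set: TF] & &, equivalence_rel (connect (crel eF f))}.
Proof.
move=> sF x y z _ _ _; split; first exact: connect0.
move=> Hxy; apply/idP/idP => H.
  by apply: connect_trans H; rewrite crel_connect_sym.
exact: connect_trans Hxy H.
Qed.

Lemma canon_pblock (TF TG TH : finType) (eF : rel TF) (f : {ffun TF -> TG * TH}) x y :
  symmetric eF -> (y \in pblock (canon eF f) x) = connect (crel eF f) x y.
Proof.
move=> sF; exact: (pblock_equivalence_partition (canon_equiv f sF)).
Qed.

Lemma canon_valid (TF TG TH : finType) (eF : rel TF) (f : {ffun TF -> TG * TH}) :
  symmetric eF ->
  partition (canon eF f) [set: TF] && [forall X in canon eF f, induced_connected eF X].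
Proof.
move=> sF. rewrite (equivalence_partitionP (canon_equiv f sF)) /=.
apply/forall_inP => X /imsetP [x _ ->]. rewrite /induced_connected.
apply/andP; split.
  by apply/set0Pn; exists x; rewrite !inE connect0.
apply/forall_inP => a; rewrite !inE => Ha; apply/forall_inP => b; rewrite !inE => Hb.
apply: (conn_restrict (e := crel eF f)).
- by move=> u v /andP [].
- by move=> u v; rewrite !inE => Hu Huv; apply: connect_trans Hu (connect1 Huv).
- by rewrite !inE.
- by apply: connect_trans _ Hb; rewrite crel_connect_sym.
Qed.

Lemma count_R (TF TG TH : finType) (eF : rel TF) (eG : rel TG) (eH : rel TH)
  (R : {set {set TF}}) :
  symmetric eF -> irreflexive eG ->
  partition R [set: TF] -> [forall X in R, induced_connected eF X] ->
  #|[set f | (f \in [set f : {ffun TF -> TG * TH} |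
                [forall x, forall y, eF x y ==> lexprod eG eH (f x) (f y)]])
             && (canon eF f == R)]|
  = hom (quot_rel eF R) eG * hom (coprod_rel eF R) eH.
Proof.
move=> sF iG pR cR.
have [/eqP covR tiR nR0] := and3P pR.
have Hx : forall x, pblock R x \in R by move=> x; apply: pblock_mem; rewrite covR inE.
pose blk x : block R := Sub (pblock R x) (Hx x).
have Hm : forall x, x \in val (blk x) by move=> x; rewrite /= mem_pblock covR inE.
have blkE : forall (P : block R) x, x \in val P -> blk x = P.
  by move=> P x xP; apply: val_inj; rewrite /= (def_pblock tiR (valP P) xP).
have Hne : forall P : block R, exists x, x \in val P.
  by move=> P; apply/set0Pn; apply: (memPn nR0); exact: valP.
pose rep (P : block R) := xchoose (Hne P).
have repP : forall P, rep P \in val P := fun P => xchooseP (Hne P).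
pose Psi (f : {ffun TF -> TG * TH}) :=
  ([ffun P : block R => (f (rep P)).1] : {ffun block R -> TG},
   [ffun u : coprod_type R => (f (val (tagged u))).2] : {ffun coprod_type R -> TH}).
pose Phi (p : {ffun block R -> TG} * {ffun coprod_type R -> TH}) : {ffun TF -> TG * TH} :=
  [ffun x => (p.1 (blk x),
              p.2 (existT (fun P : block R => {y | y \in val P}) (blk x) (exist _ x (Hm x))))].
set target := [set f | _].
have gc : forall f, f \in target -> forall (P : block R) y z,
    y \in val P -> z \in val P -> (f y).1 = (f z).1.
  move=> f; rewrite inE => /andP [_ /eqP cf] P y z yP zP.
  have : z \in pblock R y by rewrite (def_pblock tiR (valP P) yP).
  rewrite -cf canon_pblock // => /(connect_const (k := fun w => (f w).1)) -> //.
  by move=> a b /andP [_ /eqP].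
have ce : forall f, f \in target -> forall a b, crel eF f a b -> pblock R a = pblock R b.
  move=> f; rewrite inE => /andP [_ /eqP cf] a b eab.
  have : b \in pblock R a by rewrite -cf canon_pblock // connect1.
  by move/same_pblock => -> //.
have fhom : forall f, f \in target -> forall x y, eF x y -> lexprod eG eH (f x) (f y).
  by move=> f; rewrite !inE => /andP [/homP H _].
rewrite /hom -cardsX -(@card_in_imset _ _ Psi target).
  apply: eq_card => -[p1 p2]; apply/imsetP/idP.
  - move=> [f ft [-> ->]]; rewrite inE /=; apply/andP; split; rewrite inE; apply/homP.
    + move=> P Q /andP [nPQ /exists_inP [p pP /exists_inP [q qQ epq]]].
      rewrite !ffunE (gc f ft P (rep P) p (repP P) pP) (gc f ft Q (rep Q) q (repP Q) qQ).
      case/orP: (fhom f ft p q epq) => // /andP [Epq _].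
      have := ce f ft p q; rewrite /crel /= epq Epq => /(_ isT).
      rewrite (def_pblock tiR (valP P) pP) (def_pblock tiR (valP Q) qQ) => E.
      by rewrite E eqxx in nPQ.
    + move=> [P [x hx]] [Q [y hy]] /andP [/eqP /= PQ exy]; subst Q.
      rewrite !ffunE /=.
      case/orP: (fhom f ft x y exy) => [/andP [_ ->] // | egxy].
      by rewrite (gc f ft P x y hx hy) iG in egxy.
  - rewrite inE /= => /andP [HA HB]; rewrite !inE in HA HB.
    move/homP: HA => HA; move/homP: HB => HB.
    exists (Phi (p1, p2)).
      rewrite !inE; apply/andP; split.
        apply/homP => x y exy; rewrite !ffunE /lexprod /=.
        case: (eqVneq (blk x) (blk y)) => Ebxy.
          apply/orP; left; apply/andP; split; first by rewrite Ebxy.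
          by apply: HB; rewrite /coprod_rel /= Ebxy eqxx /= exy.
        apply/orP; right; apply: HA; rewrite /quot_rel.
        apply/andP; split; first by rewrite (inj_eq val_inj).
        apply/exists_inP; exists x; first exact: Hm.
        by apply/exists_inP; exists y; first exact: Hm.
      apply/eqP; apply: (etrans _ (equivalence_partition_pblock pR)); rewrite /canon.
      rewrite /equivalence_partition; apply: eq_imset => x; apply/setP => y; rewrite !inE /=.
      apply/idP/idP.
        move/(connect_const (k := pblock R)) => ->; first by rewrite mem_pblock covR inE.
        move=> a b /andP [eab]; rewrite !ffunE /= => /eqP E.
        case: (eqVneq (blk a) (blk b)) => [/(congr1 val) //| nab].
        have : quot_rel eF R (blk a) (blk b).
          apply/andP; split; first by rewrite (inj_eq val_inj).
          apply/exists_inP; exists a; first exact: Hm.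
          by apply/exists_inP; exists b; first exact: Hm.
        by move/HA; rewrite E iG.
      move=> yx.
      move/forall_inP: cR => /(_ _ (Hx x)) /andP [_ /forall_inP H].
      have xx : x \in pblock R x by exact: Hm.
      move/forall_inP: (H x xx) => /(_ y yx).
      apply: connect_sub => a b /and3P [aP bP eab]; apply: connect1.
      rewrite /crel /= eab !ffunE /=.
      by rewrite (blkE (blk x) a aP) (blkE (blk x) b bP) eqxx.
    congr pair; apply/ffunP.
      by move=> P; rewrite !ffunE /= (blkE P (rep P) (repP P)).
    move=> [P [x hx]]; rewrite !ffunE /=.
    have E := blkE P x hx. subst P.
    by rewrite (bool_irrelevance hx (Hm x)).
move=> f1 f2 ft1 ft2 E; apply/ffunP => x.
have E1 := congr1 (fun p : {ffun block R -> TG} * {ffun coprod_type R -> TH} => p.1 (blk x)) E.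
have E2 := congr1 (fun p : {ffun block R -> TG} * {ffun coprod_type R -> TH} => p.2 (existT (fun P : block R => {y | y \in val P}) (blk x) (exist _ x (Hm x)))) E.
rewrite /= !ffunE /= in E1 E2.
rewrite (gc f1 ft1 (blk x) _ x (repP _) (Hm x)) (gc f2 ft2 (blk x) _ x (repP _) (Hm x)) in E1.
by rewrite [f1 x]surjective_pairing [f2 x]surjective_pairing E1 E2.
Qed.

Theorem theorem16 (TF TG TH : finType) (eF : rel TF) (eG : rel TG) (eH : rel TH) :
  simple_graph eF -> simple_graph eG -> simple_graph eH ->
  hom eF (lexprod eG eH) =
  \sum_(R : {set {set TF}} | partition R [set: TF] &&
                             [forall X in R, induced_connected eF X])
     hom (quot_rel eF R) eG * hom (coprod_rel eF R) eH.
Proof.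
move=> [sF iF] [sG iG] [sH iH].
rewrite {1}/hom -sum1_card.
rewrite (partition_big (canon eF) (fun R : {set {set TF}} => partition R [set: TF] &&
                             [forall X in R, induced_connected eF X])); last first.
  by move=> f _; exact: canon_valid.
apply: eq_bigr => R /andP [pR cR].
by rewrite sum1dep_card count_R.
Qed.
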